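(* Let $i,j\geq 1$ and $n\geq 1$ be integers. Let $U(i,j,n)$ be the set of all triples $(L_1,L_2,L_3)$ of lattice walks of length $n$ with steps $U=(1,1)$ and $D=(1,-1)$, where $L_1$ starts at $(0,0)$, $L_2$ starts at $(0,2i)$ and $L_3$ starts at $(0,2i+2j)$. Let $M_{12,23}(n)$ be the set of triples $(L_1,L_2,L_3)\in U(i,j,n)$ such that $L_2$ intersects both $L_1$ and $L_3$, and let $M_{13}(n)$ be the set of triples $(L_1,L_2,L_3)\in U(i,j,n)$ such that $L_1$ intersects $L_3$. Then there exists a bijection between $M_{12,23}(n)$ and $M_{13}(n)$.
   Context: A walk of length $n$ is a lattice path consisting of $n$ steps, each an up step $(1,1)$ or a down step $(1,-1)$. Two walks are said to intersect if they share a common lattice point. *)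

(* Defs.v *)
From mathcomp Require Import all_boot all_order all_algebra.
Set Implicit Arguments. Unset Strict Implicit. Unset Printing Implicit Defensive.
Import Order.TTheory GRing.Theory Num.Theory.
Local Open Scope ring_scope.

(* A walk of length n: a sequence of n steps, true = up step (1,1),
   false = down step (1,-1). *)
Definition walk (n : nat) := {ffun 'I_n -> bool}.

Definition step_val (b : bool) : int := if b then 1 else -1.

Definition height (n : nat) (h0 : int) (w : walk n) (k : nat) : int :=
  h0 + \sum_(t < n | (t < k)%N) step_val (w t).

(* Two walks (with starting heights h1, h2) intersect iff they share a
   lattice point: since both have x-coordinates 0..n, this means equal
   heights at some common abscissa k in {0,...,n}. *)
Definition intersect (n : nat) (h1 : int) (w1 : walk n) (h2 : int) (w2 : walk n)
  : bool :=
  [exists k : 'I_n.+1, height h1 w1 k == height h2 w2 k].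

Definition triple (n : nat) := (walk n * walk n * walk n)%type.

Definition h1 : int := 0.
Definition h2 (i : nat) : int := (2 * i)%:Z.
Definition h3 (i j : nat) : int := (2 * i + 2 * j)%:Z.

(* U(i,j,n) is the set of all triples; these are its subsets. *)
Definition M12_23 (i j n : nat) : {set triple n} :=
  [set L : triple n |
     intersect h1 L.1.1 (h2 i) L.1.2 && intersect (h2 i) L.1.2 (h3 i j) L.2].

Definition M13 (i j n : nat) : {set triple n} :=
  [set L : triple n | intersect h1 L.1.1 (h3 i j) L.2].

(* Main.v *)
Require Import Defs.
From mathcomp Require Import all_boot all_order all_algebra zify ring.
Set Implicit Arguments. Unset Strict Implicit. Unset Printing Implicit Defensive.
Import Order.TTheory GRing.Theory Num.Theory.
Local Open Scope ring_scope.

Section H.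
Variable n : nat.
Implicit Types (w v : walk n) (x y : int).

Lemma height0 x w : height x w 0 = x.
Proof. by rewrite /height big_pred0 ?addr0. Qed.

Lemma hstep x w k (hk : (k < n)%N) :
  height x w k.+1 = height x w k + step_val (w (Ordinal hk)).
Proof.
rewrite /height (bigD1 (Ordinal hk)) //= -addrA [_ + step_val _]addrC.
congr (_ + (_ + _)); apply: eq_bigl => t.
by rewrite ltnS leq_eqVlt -val_eqE /=; case: (ltngtP t k).
Qed.

Lemma hstep0 x w k : (n <= k)%N -> height x w k.+1 = height x w k.
Proof.
move=> hk; rewrite /height; congr (_ + _); apply: eq_bigl => t.
have := ltn_ord t; lia.
Qed.

Lemma step_cases b : step_val b = 1 \/ step_val b = -1.
Proof. by case: b; [left|right]. Qed.

Lemma diff_even x y w v (e : exists z, x - y = 2 * z) k :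
  exists z, height x w k - height y v k = 2 * z.
Proof.
elim: k => [|k [z Hz]]; first by rewrite !height0.
case: (ltnP k n) => hk.
  rewrite !hstep; case: (step_cases (w (Ordinal hk))) => ->;
  case: (step_cases (v (Ordinal hk))) => ->.
  - exists z; lia.
  - exists (z+1); lia.
  - exists (z-1); lia.
  - exists z; lia.
by rewrite !hstep0 //; exists z.
Qed.

Lemma diff_step x y w v k :
  height x w k - height y v k - 2 <= height x w k.+1 - height y v k.+1 <=
  height x w k - height y v k + 2.
Proof.
case: (ltnP k n) => hk.
  rewrite !hstep; case: (step_cases (w (Ordinal hk))) => ->;
  case: (step_cases (v (Ordinal hk))) => ->; apply/andP; split; lia.
by rewrite !hstep0 //; apply/andP; split; lia.
Qed.

Lemma ivt x y w v (e : exists z, x - y = 2 * z) p q : (p <= q)%N ->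
  height x w p <= height y v p -> height y v q <= height x w q ->
  exists k, [/\ (p <= k)%N, (k <= q)%N & height x w k = height y v k].
Proof.
move=> pq; rewrite -(subnKC pq); move: (q - p)%N => m {pq q}.
elim: m p => [|m IH] p h1 h2.
  exists p; split => //; rewrite addn0 in h2; lia.
case: (diff_even w v e p) => z Hz.
have := diff_step x y w v p.
case: (eqVneq (height x w p) (height y v p)) => E.
  by move=> _; exists p; split => //; rewrite leq_addr.
move=> /andP [_ hs].
have [k [k1 k2 k3]] : exists k, [/\ (p.+1 <= k)%N, (k <= p.+1 + m)%N & height x w k = height y v k].
  apply: IH.
    have : z <= -1 by lia.
    lia.
  by move: h2; rewrite addSnnS.
by exists k; split => //; lia.
Qed.


Lemma below x y w v (e : exists z, x - y = 2 * z) m : x < y ->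
  (forall k, (k < m)%N -> height x w k != height y v k) ->
  forall k, (k < m)%N -> height x w k < height y v k.
Proof.
move=> xy hne k km; rewrite ltNge; apply/negP => hk.
have [k' [_ k2 k3]] : exists k0, [/\ (0 <= k0)%N, (k0 <= k)%N & height x w k0 = height y v k0].
  apply: (@ivt x y w v e 0 k (leq0n k)) => //.

  by rewrite !height0 ltW.
by move: (hne k' (leq_ltn_trans k2 km)); rewrite k3 eqxx.
Qed.

Definition swap w v (a : nat) : walk n := [ffun t : 'I_n => if (t < a)%N then w t else v t].

Lemma swap_gen x y w v a k :
  height x (swap w v a) k = height x w (minn k a) + (height y v k - height y v (minn k a)).
Proof.
rewrite /height (bigID (fun t : 'I_n => (t < a)%N)) /=.
rewrite [\sum_(t < n | (t < k)%N) _](bigID (fun t : 'I_n => (t < a)%N)) /=.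
have E1 : \sum_(i < n | (i < k)%N && (i < a)%N) step_val (swap w v a i) =
          \sum_(i < n | (i < minn k a)%N) step_val (w i).
  rewrite [RHS](eq_bigl (fun i : 'I_n => (i < k)%N && (i < a)%N)); last first.
    by move=> i; rewrite /= ltn_min.
  by apply: eq_bigr => i /andP [_ hi]; rewrite ffunE hi.
have E2 : \sum_(i < n | (i < k)%N && ~~ (i < a)%N) step_val (swap w v a i) =
          \sum_(i < n | (i < k)%N && ~~ (i < a)%N) step_val (v i).
  by apply: eq_bigr => i /andP [_ /negbTE hi]; rewrite ffunE hi.
have E3 : \sum_(i < n | (i < minn k a)%N) step_val (v i) =
          \sum_(i < n | (i < k)%N && (i < a)%N) step_val (v i).
  by apply: eq_bigl => i; rewrite /= ltn_min.
rewrite E1 E2 E3; ring.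
Qed.

Lemma swapH x y w v a k : height x w a = height y v a ->
  height x (swap w v a) k = if (k <= a)%N then height x w k else height y v k.
Proof.
move=> E; rewrite (swap_gen _ y).
case: (leqP k a) => h.
  lia.
lia.
Qed.

Lemma swapK w v a : swap (swap w v a) (swap v w a) a = w.
Proof. apply/ffunP => t; rewrite !ffunE; by case: (ltnP t a). Qed.

Definition first x w y v : nat :=
  find (fun k => height x w k == height y v k) (iota 0 n.+1).

Lemma first_spec x w y v : intersect x w y v ->
  [/\ (first x w y v <= n)%N, height x w (first x w y v) = height y v (first x w y v)
   & forall k, (k < first x w y v)%N -> height x w k != height y v k].
Proof.
move=> /existsP [k /eqP hk].
have hh : has (fun k => height x w k == height y v k) (iota 0 n.+1).
  by apply/hasP; exists (val k); [rewrite mem_iota /= add0n ltn_ord | apply/eqP].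
have hf := hh; rewrite has_find size_iota in hf.
split; first by rewrite -ltnS.
  by have := nth_find 0 hh; rewrite nth_iota // add0n => /eqP.
move=> j hj; have := before_find 0 hj; rewrite nth_iota ?add0n //.
  by move=> ->.
exact: ltn_trans hj hf.
Qed.

Lemma meet_inter x w y v k : (k <= n)%N -> height x w k = height y v k -> intersect x w y v.
Proof.
by move=> hk E; apply/existsP; exists (Ordinal (hk : (k < n.+1)%N)); apply/eqP.
Qed.

Lemma first_eq x w y v m : (m <= n)%N -> height x w m = height y v m ->
  (forall k, (k < m)%N -> height x w k != height y v k) -> first x w y v = m.
Proof.
move=> hm E hb.
have [h1 h2 h3] := first_spec (meet_inter hm E).
case: (ltngtP (first x w y v) m) => // c.
  by move: (hb _ c); rewrite h2 eqxx.
by move: (h3 _ c); rewrite E eqxx.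
Qed.

End H.


Section M.
Variables (i j n : nat).
Hypotheses (hi : (1 <= i)%N) (hj : (1 <= j)%N).

Let ev12 : exists z : int, h1 - h2 i = 2 * z.
Proof. exists (- (i%:Z)); rewrite /h1 /h2; lia. Qed.
Let ev23 : exists z : int, h2 i - h3 i j = 2 * z.
Proof. exists (- (j%:Z)); rewrite /h2 /h3; lia. Qed.
Let lt12 : h1 < h2 i. Proof. rewrite /h1 /h2; lia. Qed.
Let lt23 : h2 i < h3 i j. Proof. rewrite /h2 /h3; lia. Qed.

Definition Ap (L : triple n) := intersect h1 L.1.1 (h2 i) L.1.2.
Definition Bp (L : triple n) := intersect (h2 i) L.1.2 (h3 i j) L.2.
Definition Cp (L : triple n) := intersect h1 L.1.1 (h3 i j) L.2.
Definition fa (L : triple n) := first h1 L.1.1 (h2 i) L.1.2.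
Definition fb (L : triple n) := first (h2 i) L.1.2 (h3 i j) L.2.

Definition f12 (L : triple n) : triple n :=
  ((swap L.1.1 L.1.2 (fa L), swap L.1.2 L.1.1 (fa L)), L.2).
Definition f23 (L : triple n) : triple n :=
  ((L.1.1, swap L.1.2 L.2 (fb L)), swap L.2 L.1.2 (fb L)).

Lemma nomeet x (w : walk n) y (v : walk n) : ~~ intersect x w y v -> forall k, (k < n.+1)%N -> height x w k != height y v k.
Proof.
move=> hn k hk; apply/negP => /eqP E; move/negP: hn; apply.
exact: meet_inter (hk : (k <= n)%N) E.
Qed.

Lemma f12_heights L : Ap L ->
  (forall k, height h1 (f12 L).1.1 k = if (k <= fa L)%N then height h1 L.1.1 k else height (h2 i) L.1.2 k) /\
  (forall k, height (h2 i) (f12 L).1.2 k = if (k <= fa L)%N then height (h2 i) L.1.2 k else height h1 L.1.1 k).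
Proof.
move=> hA; have [a1 a2 a3] := first_spec hA.
by split => k; rewrite /= ?(swapH _ a2) ?(swapH _ (esym a2)).
Qed.

Lemma f12_first L : Ap L -> fa (f12 L) = fa L.
Proof.
move=> hA; have [a1 a2 a3] := first_spec hA.
have [H1 H2] := f12_heights hA.
rewrite /fa; apply: first_eq => //.
  by rewrite H1 H2 leqnn.
by move=> k hk; rewrite H1 H2 ltnW //; exact: a3.
Qed.

Lemma f12K L : Ap L -> f12 (f12 L) = L.
Proof.
move=> hA; have e := f12_first hA.
move: e; rewrite /f12 /= => ->.
by rewrite !swapK; clear hA; case: L => [[]].
Qed.

Lemma f23_heights L : Bp L ->
  (forall k, height (h2 i) (f23 L).1.2 k = if (k <= fb L)%N then height (h2 i) L.1.2 k else height (h3 i j) L.2 k) /\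
  (forall k, height (h3 i j) (f23 L).2 k = if (k <= fb L)%N then height (h3 i j) L.2 k else height (h2 i) L.1.2 k).
Proof.
move=> hB; have [b1 b2 b3] := first_spec hB.
by split => k; rewrite /= ?(swapH _ b2) ?(swapH _ (esym b2)).
Qed.

Lemma f23_first L : Bp L -> fb (f23 L) = fb L.
Proof.
move=> hB; have [b1 b2 b3] := first_spec hB.
have [H1 H2] := f23_heights hB.
rewrite /fb; apply: first_eq => //.
  by rewrite H1 H2 leqnn.
by move=> k hk; rewrite H1 H2 ltnW //; exact: b3.
Qed.

Lemma f23K L : Bp L -> f23 (f23 L) = L.
Proof.
move=> hB; have e := f23_first hB.
move: e; rewrite /f23 /= => ->.
by rewrite !swapK; clear hB; case: L => [[]].
Qed.



Lemma PR L : [&& Ap L, Bp L, ~~ Cp L & (fa L < fb L)%N] -> Cp (f12 L) && ~~ Bp (f12 L).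
Proof.
case/and4P => hA hB hC hab.
have [a1 a2 a3] := first_spec hA; have [b1 b2 b3] := first_spec hB.
have [H1 H2] := f12_heights hA.
apply/andP; split.
  apply: (meet_inter b1); rewrite H1 ifN -?ltnNge //.
apply/negP; rewrite /Ap /Bp /Cp => /existsP [k /eqP hk]; rewrite H2 in hk.
move: hk; case: (leqP k (fa L)) => hka hk.
  by move: (b3 _ (leq_ltn_trans hka hab)); rewrite hk eqxx.
by move/negP: hC; apply; apply: (meet_inter (ltn_ord k : (k <= n)%N)) hk.
Qed.

Lemma R_A L : Cp L -> ~~ Bp L -> Ap L.
Proof.
move=> hC hB; have [c /eqP hc] := existsP hC.
have l23 := below ev23 lt23 (nomeet hB).
have [k [_ k2 k3]] : exists k0, [/\ (0 <= k0)%N, (k0 <= c)%N & height h1 L.1.1 k0 = height (h2 i) L.1.2 k0].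
  apply: (ivt ev12 (leq0n c)).
    by rewrite !height0 ltW.
  by rewrite hc ltW // l23.
apply: (meet_inter _ k3); have := ltn_ord c; lia.
Qed.

Lemma RP L : Cp L && ~~ Bp L -> [&& Ap (f12 L), Bp (f12 L), ~~ Cp (f12 L) & (fa (f12 L) < fb (f12 L))%N].
Proof.
case/andP => hC hB; have hA := R_A hC hB.
have [c /eqP hc] := existsP hC.
have l23 := below ev23 lt23 (nomeet hB).
have [a1 a2 a3] := first_spec hA.
have l12 := below ev12 lt12 a3.
have le13 : forall k, (k <= fa L)%N -> height h1 L.1.1 k < height (h3 i j) L.2 k.
  move=> k hk; have hkn : (k < n.+1)%N by rewrite ltnS (leq_trans hk a1).
  case: (ltngtP k (fa L)) hk => // [hk _|-> _].
    exact: lt_trans (l12 _ hk) (l23 _ hkn).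
  by rewrite a2 l23 // ltnS.
have [H1 H2] := f12_heights hA.
have hca : (fa L < c)%N.
  rewrite ltnNge; apply/negP => hk; move: (le13 _ hk); rewrite hc ltxx //.
have hA' : Ap (f12 L).
  by apply: (meet_inter a1); rewrite H1 H2 leqnn.
have hB' : Bp (f12 L).
  apply: (meet_inter (ltn_ord c : (c <= n)%N)); rewrite H2 ifN -?ltnNge //.
apply/and4P; split => //.
  apply/negP; rewrite /Ap /Bp /Cp => /existsP [k /eqP hk]; rewrite H1 in hk.
  move: hk; case: (leqP k (fa L)) => hka hk.
    by move: (le13 _ hka); rewrite hk ltxx.
  by move: (l23 _ (ltn_ord k)); rewrite hk ltxx.
rewrite (f12_first hA).
have [b1 b2 b3] := first_spec hB'.
rewrite ltnNge; apply/negP => hb.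
move: b2; rewrite -/(fb _) H2 hb => hb2.
have : (fb (f12 L) < n.+1)%N by [].
by move=> /l23; rewrite hb2 ltxx.
Qed.

Lemma QS L : [&& Ap L, Bp L, ~~ Cp L & (fb L < fa L)%N] -> Cp (f23 L) && ~~ Ap (f23 L).
Proof.
case/and4P => hA hB hC hab.
have [a1 a2 a3] := first_spec hA; have [b1 b2 b3] := first_spec hB.
have [H2 H3] := f23_heights hB.
apply/andP; split.
  apply: (meet_inter a1); rewrite H3 ifN -?ltnNge //.
apply/negP; rewrite /Ap /Bp /Cp => /existsP [k /eqP hk]; rewrite H2 in hk.
move: hk; case: (leqP k (fb L)) => hka hk.
  by move: (a3 _ (leq_ltn_trans hka hab)); rewrite hk eqxx.
by move/negP: hC; apply; apply: (meet_inter (ltn_ord k : (k <= n)%N)) hk.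
Qed.

Lemma S_B L : Cp L -> ~~ Ap L -> Bp L.
Proof.
move=> hC hA; have [c /eqP hc] := existsP hC.
have l12 := below ev12 lt12 (nomeet hA).
have [k [_ k2 k3]] : exists k0, [/\ (0 <= k0)%N, (k0 <= c)%N & height (h2 i) L.1.2 k0 = height (h3 i j) L.2 k0].
  apply: (ivt ev23 (leq0n c)).
    by rewrite !height0 ltW.
  by rewrite -hc ltW // l12.
apply: (meet_inter _ k3); have := ltn_ord c; lia.
Qed.

Lemma SQ L : Cp L && ~~ Ap L -> [&& Ap (f23 L), Bp (f23 L), ~~ Cp (f23 L) & (fb (f23 L) < fa (f23 L))%N].
Proof.
case/andP => hC hA; have hB := S_B hC hA.
have [c /eqP hc] := existsP hC.
have l12 := below ev12 lt12 (nomeet hA).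
have [b1 b2 b3] := first_spec hB.
have l23 := below ev23 lt23 b3.
have le13 : forall k, (k <= fb L)%N -> height h1 L.1.1 k < height (h3 i j) L.2 k.
  move=> k hk; have hkn : (k < n.+1)%N by rewrite ltnS (leq_trans hk b1).
  case: (ltngtP k (fb L)) hk => // [hk _|-> _].
    exact: lt_trans (l12 _ hkn) (l23 _ hk).
  by rewrite -b2 l12 // ltnS.
have [H2 H3] := f23_heights hB.
have hcb : (fb L < c)%N.
  rewrite ltnNge; apply/negP => hk; move: (le13 _ hk); rewrite hc ltxx //.
have hB' : Bp (f23 L).
  by apply: (meet_inter b1); rewrite H2 H3 leqnn.
have hA' : Ap (f23 L).
  apply: (meet_inter (ltn_ord c : (c <= n)%N)); rewrite H2 ifN -?ltnNge //.
apply/and4P; split => //.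
  apply/negP; rewrite /Ap /Bp /Cp => /existsP [k /eqP hk]; rewrite H3 in hk.
  move: hk; case: (leqP k (fb L)) => hka hk.
    by move: (le13 _ hka); rewrite hk ltxx.
  by move: (l12 _ (ltn_ord k)); rewrite hk ltxx.
rewrite (f23_first hB).
have [a1' a2' a3'] := first_spec hA'.
rewrite ltnNge; apply/negP => ha.
move: a2'; rewrite -/(fa _) H2 ha => ha2.
have : (fa (f23 L) < n.+1)%N by [].
by move=> /l12; rewrite ha2 ltxx.
Qed.


Definition Ps := [set L : triple n | [&& Ap L, Bp L, ~~ Cp L & (fa L < fb L)%N]].
Definition Qs := [set L : triple n | [&& Ap L, Bp L, ~~ Cp L & (fb L < fa L)%N]].
Definition Rs := [set L : triple n | Cp L && ~~ Bp L].
Definition Ss := [set L : triple n | Cp L && ~~ Ap L].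

Lemma cardPR : #|Ps| = #|Rs|.
Proof.
have iP : {in Ps &, injective f12}.
  move=> x y; rewrite !inE => /and4P [hx _ _ _] /and4P [hy _ _ _] e.
  by rewrite -(f12K hx) -(f12K hy) e.
have iR : {in Rs &, injective f12}.
  move=> x y; rewrite !inE => /andP [hx1 hx2] /andP [hy1 hy2] e.
  by rewrite -(f12K (R_A hx1 hx2)) -(f12K (R_A hy1 hy2)) e.
apply/eqP; rewrite eqn_leq; apply/andP; split.
  rewrite -(card_in_imset iP); apply: subset_leq_card; apply/subsetP => y /imsetP [x hx ->].
  by rewrite inE; apply: PR; rewrite inE in hx.
rewrite -(card_in_imset iR); apply: subset_leq_card; apply/subsetP => y /imsetP [x hx ->].
by rewrite inE; apply: RP; rewrite inE in hx.
Qed.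

Lemma cardQS : #|Qs| = #|Ss|.
Proof.
have iP : {in Qs &, injective f23}.
  move=> x y; rewrite !inE => /and4P [_ hx _ _] /and4P [_ hy _ _] e.
  by rewrite -(f23K hx) -(f23K hy) e.
have iR : {in Ss &, injective f23}.
  move=> x y; rewrite !inE => /andP [hx1 hx2] /andP [hy1 hy2] e.
  by rewrite -(f23K (S_B hx1 hx2)) -(f23K (S_B hy1 hy2)) e.
apply/eqP; rewrite eqn_leq; apply/andP; split.
  rewrite -(card_in_imset iP); apply: subset_leq_card; apply/subsetP => y /imsetP [x hx ->].
  by rewrite inE; apply: QS; rewrite inE in hx.
rewrite -(card_in_imset iR); apply: subset_leq_card; apply/subsetP => y /imsetP [x hx ->].
by rewrite inE; apply: SQ; rewrite inE in hx.
Qed.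

Lemma ab_neq L : Ap L -> Bp L -> ~~ Cp L -> fa L != fb L.
Proof.
move=> hA hB hC; apply/eqP => e.
have [a1 a2 _] := first_spec hA; have [_ b2 _] := first_spec hB.
move/negP: hC; apply; apply: (meet_inter a1).
by rewrite a2; move: b2; rewrite -/(fb L) -e.
Qed.

Lemma card_main : #|M12_23 i j n| = #|M13 i j n|.
Proof.
set X := M12_23 i j n; set Y := M13 i j n.
have eXY : X :\: Y = Ps :|: Qs.
  apply/setP => L; rewrite !inE -/(Ap L) -/(Bp L) -/(Cp L).
  case hA: (Ap L); case hB: (Bp L); case hC: (Cp L) => //=.
  have := ab_neq hA hB (negbT hC); case: ltngtP => //.
have eYX : Y :\: X = Rs :|: Ss.
  apply/setP => L; rewrite !inE -/(Ap L) -/(Bp L) -/(Cp L).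
  by case hA: (Ap L); case hB: (Bp L); case hC: (Cp L).
have dPQ : Ps :&: Qs = set0.
  apply/setP => L; rewrite !inE; case: ltngtP => _; by rewrite ?andbF.
have dRS : Rs :&: Ss = set0.
  apply/setP => L; rewrite !inE.
  case hC: (Cp L); case hB: (Bp L) => //=.
  by rewrite (R_A hC (negbT hB)).
rewrite -(cardsID Y X) -(cardsID X Y) setIC eXY eYX !cardsU dPQ dRS !cards0.
by rewrite cardPR cardQS.
Qed.

End M.

Lemma card_bij (T1 T2 : finType) : #|T1| = #|T2| -> exists f : T1 -> T2, bijective f.
Proof.
move=> e.
exists (fun x => enum_val (cast_ord e (enum_rank x))).
exists (fun y => enum_val (cast_ord (esym e) (enum_rank y))).
  by move=> x; rewrite enum_valK cast_ordK enum_rankK.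
by move=> y; rewrite enum_valK cast_ordKV enum_rankK.
Qed.

Close Scope ring_scope.

Theorem theorem2p1 (i j n : nat) (hi : (1 <= i)%N) (hj : (1 <= j)%N) (hn : (1 <= n)%N) :
  exists f : {L : triple n | L \in M12_23 i j n} -> {L : triple n | L \in M13 i j n},
    bijective f.
Proof.
apply: card_bij; rewrite !card_sig.
have e1 : #|[pred x | x \in M12_23 i j n]| = #|M12_23 i j n| by apply: eq_card.
have e2 : #|[pred x | x \in M13 i j n]| = #|M13 i j n| by apply: eq_card.
by rewrite e1 e2 (@card_main i j n hi hj).
Qed.
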